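(* Let $N\ge 4$ and $\ell>0$. For every equilateral polygon $\mathcal{P}_N=\{y_1,\dots,y_N\}\subset\mathbb{R}^2$ with edge length $\ell$, the sum of lengths of its $2$-diagonals satisfies $\mathcal{D}_2(\mathcal{P}_N)=\sum_{i=1}^N|y_i-y_{i+2}|\le \mathcal{D}_2(\tilde{\mathcal{P}}_N)=2N\ell\cos\frac{\pi}{N}$, with equality only if $\mathcal{P}_N$ is a regular polygon; that is, property $(P_2)$ holds globally in dimension $d=2$.
   Context: A polygon is identified with the ordered set of its vertices $\{y_1,\dots,y_N\}$, indices taken mod $N$; it is equilateral with edge length $\ell$ if $|y_{i+1}-y_i|=\ell$ for all $i$. The regular polygon $\tilde{\mathcal{P}}_N$ of edge length $\ell$ is the planar convex regular $N$-gon with consecutive vertices adjacent, lying on a circle of radius $\ell\,(2\sin\frac{\pi}{N})^{-1}$, determined up to Euclidean transformations. Property $(P_2)$: the sum $\mathcal{D}_2$ of lengths of all $2$-diagonals $[y_i,y_{i+2}]$ is, among equilateral polygons with fixed edge length $\ell$, uniquely maximized (up to Euclidean transformations) by the regular polygon. *)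

(* Defs.v *)
From Stdlib Require Import Reals Lra Lia.
Open Scope R_scope.

Definition pt := (R * R)%type.

Definition dist2 (p q : pt) : R :=
  sqrt ((fst p - fst q) ^ 2 + (snd p - snd q) ^ 2).

(* A polygon with N vertices is a map y : nat -> pt, of which only the values
   y 0, ..., y (N-1) matter; indices are always taken mod N. *)
Definition vtx (N : nat) (y : nat -> pt) (i : nat) : pt := y (i mod N)%nat.

Definition equilateral (N : nat) (l : R) (y : nat -> pt) : Prop :=
  forall i : nat, (i < N)%nat -> dist2 (vtx N y (S i)) (vtx N y i) = l.

Definition D2 (N : nat) (y : nat -> pt) : R :=
  sum_f_R0 (fun i => dist2 (vtx N y i) (vtx N y (i + 2))) (N - 1).

Definition reg_polygon (N : nat) (l : R) (i : nat) : pt :=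
  let r := l / (2 * sin (PI / INR N)) in
  (r * cos (2 * PI * INR i / INR N), r * sin (2 * PI * INR i / INR N)).

Definition isometry (f : pt -> pt) : Prop :=
  forall p q : pt, dist2 (f p) (f q) = dist2 p q.

Definition is_regular (N : nat) (l : R) (y : nat -> pt) : Prop :=
  exists f : pt -> pt, isometry f /\
    forall i : nat, (i < N)%nat -> y i = f (reg_polygon N l i).

(* Main.v *)
Require Import Defs.
From Stdlib Require Import Reals Lra Lia Psatz.
Open Scope R_scope.
Set Warnings "-deprecated".

Fixpoint sm (f : nat -> R) (n : nat) : R :=
  match n with O => 0 | S k => sm f k + f k end.

Lemma sum_f_R0_sm f n : sum_f_R0 f n = sm f (S n).
Proof. induction n; simpl in *; [ring | rewrite IHn; ring]. Qed.

Lemma sm_ext f g n : (forall i, (i < n)%nat -> f i = g i) -> sm f n = sm g n.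
Proof. induction n; intros H; simpl; auto. rewrite IHn, H; auto. Qed.

Lemma sm_le f g n : (forall i, (i < n)%nat -> f i <= g i) -> sm f n <= sm g n.
Proof. induction n; intros H; simpl; [lra|]. pose proof (IHn (fun i Hi => H i ltac:(lia))). pose proof (H n ltac:(lia)). lra. Qed.

Lemma sm_plus f g n : sm (fun i => f i + g i) n = sm f n + sm g n.
Proof. induction n; simpl; [ring | rewrite IHn; ring]. Qed.

Lemma sm_scal c f n : sm (fun i => c * f i) n = c * sm f n.
Proof. induction n; simpl; [ring | rewrite IHn; ring]. Qed.

Lemma sm_const c n : sm (fun _ => c) n = INR n * c.
Proof. induction n; simpl sm; [simpl; ring | rewrite IHn, S_INR; ring]. Qed.

Lemma sm_tele g n : sm (fun i => g (S i) - g i) n = g n - g O.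
Proof. induction n; simpl; [ring | rewrite IHn; ring]. Qed.

Lemma sm_nonneg f n : (forall i, (i < n)%nat -> 0 <= f i) -> 0 <= sm f n.
Proof. intros H. replace 0 with (sm (fun _ => 0) n). apply sm_le; auto.
 rewrite sm_const; ring. Qed.

Lemma sm_zero f n : (forall i, (i < n)%nat -> 0 <= f i) -> sm f n = 0 ->
  forall i, (i < n)%nat -> f i = 0.
Proof.
  induction n; intros H Hs i Hi; [lia|]. simpl in Hs.
  assert (0 <= sm f n) by (apply sm_nonneg; intros; apply H; lia).
  pose proof (H n ltac:(lia)).
  destruct (Nat.eq_dec i n) as [->|]; [lra|].
  apply IHn; [intros; apply H; lia | lra | lia].
Qed.

Lemma sm_abs f n : Rabs (sm f n) <= sm (fun i => Rabs (f i)) n.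
Proof. induction n; simpl; [rewrite Rabs_R0; lra|].
  pose proof (Rabs_triang (sm f n) (f n)); lra. Qed.

Definition ang (p : pt) : R :=
  if Rle_dec 0 (snd p) then acos (fst p) else - acos (fst p).

Lemma ang_spec p : fst p ^ 2 + snd p ^ 2 = 1 ->
  cos (ang p) = fst p /\ sin (ang p) = snd p /\ - PI <= ang p <= PI.
Proof.
  destruct p as [x y]; simpl; intros H.
  assert (Hx : -1 <= x <= 1) by nra.
  pose proof (acos_bound x).
  assert (Hs : sin (acos x) = Rabs y).
  { rewrite sin_acos by lra. rewrite <- sqrt_Rsqr_abs. f_equal. unfold Rsqr. nra. }
  unfold ang; simpl; destruct (Rle_dec 0 y).
  - rewrite cos_acos, Hs, Rabs_right by lra. lra.
  - rewrite cos_neg, sin_neg, cos_acos, Hs, Rabs_left by lra. lra.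
Qed.

Definition turn (psi : R) (v : pt) : R :=
  ang (fst v * cos psi + snd v * sin psi, - fst v * sin psi + snd v * cos psi).

Lemma cs1 x : cos x ^ 2 + sin x ^ 2 = 1.
Proof. pose proof (sin2_cos2 x). unfold Rsqr in H. lra. Qed.

Lemma turn_spec psi v : fst v ^ 2 + snd v ^ 2 = 1 ->
  cos (psi + turn psi v) = fst v /\ sin (psi + turn psi v) = snd v /\
  - PI <= turn psi v <= PI.
Proof.
  destruct v as [x y]; cbn [fst snd]; intros H.
  pose proof (cs1 psi) as Hc.
  destruct (ang_spec (x * cos psi + y * sin psi, - x * sin psi + y * cos psi)) as [H1 [H2 H3]].
  { cbn [fst snd]. assert (E : (x * cos psi + y * sin psi) ^ 2 + (- x * sin psi + y * cos psi) ^ 2 - 1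
        = (x^2+y^2) * (cos psi ^ 2 + sin psi ^ 2) - 1) by ring.
    rewrite Hc, H in E. lra. }
  cbn [fst snd] in H1, H2. unfold turn; cbn [fst snd].
  rewrite cos_plus, sin_plus, H1, H2. split; [|split; auto].
  - assert (E : cos psi * (x * cos psi + y * sin psi) - sin psi * (- x * sin psi + y * cos psi) - x
       = x * (cos psi ^ 2 + sin psi ^ 2 - 1)) by ring. rewrite Hc in E. lra.
  - assert (E : sin psi * (x * cos psi + y * sin psi) + cos psi * (- x * sin psi + y * cos psi) - y
       = y * (cos psi ^ 2 + sin psi ^ 2 - 1)) by ring. rewrite Hc in E. lra.
Qed.

Lemma diag_len a d l : 0 < l -> - PI <= d <= PI ->
  sqrt ((l * (cos a + cos (a + d))) ^ 2 + (l * (sin a + sin (a + d))) ^ 2) = 2 * l * cos (d / 2).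
Proof.
  intros Hl Hd. set (h := d / 2). set (X := a + h).
  replace a with (X - h) by (unfold X; ring).
  replace (X - h + d) with (X + h) by (unfold X, h; field).
  rewrite cos_plus, cos_minus, sin_plus, sin_minus.
  assert (Hch : 0 <= cos h) by (apply cos_ge_0; unfold h; lra).
  assert (E : (l * (cos X * cos h + sin X * sin h + (cos X * cos h - sin X * sin h))) ^ 2 +
     (l * (sin X * cos h - cos X * sin h + (sin X * cos h + cos X * sin h))) ^ 2
     - (2 * l * cos h) ^ 2 = 4 * l^2 * cos h ^ 2 * (cos X ^ 2 + sin X ^ 2 - 1)) by ring.
  rewrite cs1 in E. replace (1 - 1) with 0 in E by ring.
  replace ((l * (cos X * cos h + sin X * sin h + (cos X * cos h - sin X * sin h))) ^ 2 +
     (l * (sin X * cos h - cos X * sin h + (sin X * cos h + cos X * sin h))) ^ 2)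
  with ((2 * l * cos h) ^ 2) by lra.
  apply sqrt_pow2. nra.
Qed.

Lemma tangent a t : 0 < a < PI / 2 -> 0 <= t <= PI / 2 ->
  cos t <= cos a - sin a * (t - a) /\ (t <> a -> cos t < cos a - sin a * (t - a)).
Proof.
  intros Ha Ht.
  assert (key : t <> a -> cos t < cos a - sin a * (t - a)).
  { intros Hne. destruct (Rlt_or_le a t) as [Hlt|Hle].
    - destruct (MVT_cor2 cos (fun x => - sin x) a t Hlt (fun c _ => derivable_pt_lim_cos c))
        as [c [Hc1 Hc2]].
      assert (sin a < sin c) by (apply sin_increasing_1; lra).
      assert (sin a * (t - a) < sin c * (t - a)) by (apply Rmult_lt_compat_r; lra).
      lra.
    - assert (Hlt : t < a) by lra.
      destruct (MVT_cor2 cos (fun x => - sin x) t a Hlt (fun c _ => derivable_pt_lim_cos c))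
        as [c [Hc1 Hc2]].
      assert (sin c < sin a) by (apply sin_increasing_1; lra).
      assert (sin c * (a - t) < sin a * (a - t)) by (apply Rmult_lt_compat_r; lra).
      lra. }
  split; auto. destruct (Req_dec t a) as [->|Hne]; [lra|]. left; auto.
Qed.

Definition uu N l y j : pt :=
  ((fst (vtx N y (S j)) - fst (vtx N y j)) / l, (snd (vtx N y (S j)) - snd (vtx N y j)) / l).

Fixpoint psi N l y j : R :=
  match j with O => ang (uu N l y O)
  | S k => psi N l y k + turn (psi N l y k) (uu N l y (S k)) end.

Definition dd N l y j := turn (psi N l y j) (uu N l y (S j)).

Lemma psi_S N l y j : psi N l y (S j) = psi N l y j + dd N l y j.
Proof. reflexivity. Qed.

Lemma vtx_mod N y j : (N > 0)%nat -> vtx N y (S (j mod N)) = vtx N y (S j) /\ vtx N y (j mod N) = vtx N y j.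
Proof.
  intros HN; unfold vtx. split; f_equal.
  - replace (S (j mod N)) with (j mod N + 1)%nat by lia.
    rewrite Nat.add_mod_idemp_l by lia. f_equal; lia.
  - apply Nat.mod_mod; lia.
Qed.

Lemma uu_unit N l y j : (N > 0)%nat -> 0 < l -> equilateral N l y ->
  fst (uu N l y j) ^ 2 + snd (uu N l y j) ^ 2 = 1.
Proof.
  intros HN Hl Heq. pose proof (Heq (j mod N)%nat (Nat.mod_upper_bound j N ltac:(lia))) as H.
  destruct (vtx_mod N y j HN) as [E1 E2]. rewrite E1, E2 in H. unfold dist2 in H.
  set (a := fst (vtx N y (S j)) - fst (vtx N y j)) in *.
  set (b := snd (vtx N y (S j)) - snd (vtx N y j)) in *.
  assert (Hsq : a ^ 2 + b ^ 2 = l ^ 2).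
  { rewrite <- H. rewrite pow2_sqrt; auto. nra. }
  unfold uu; cbn [fst snd]. fold a b.
  replace ((a / l) ^ 2 + (b / l) ^ 2) with ((a ^ 2 + b ^ 2) / l ^ 2) by (field; lra).
  rewrite Hsq. field. lra.
Qed.

Lemma psi_spec N l y j : (N > 0)%nat -> 0 < l -> equilateral N l y ->
  cos (psi N l y j) = fst (uu N l y j) /\ sin (psi N l y j) = snd (uu N l y j).
Proof.
  intros HN Hl Heq. destruct j as [|j]; simpl psi.
  - destruct (ang_spec _ (uu_unit N l y 0 HN Hl Heq)) as [A [B _]]; auto.
  - destruct (turn_spec (psi N l y j) _ (uu_unit N l y (S j) HN Hl Heq)) as [A [B _]]; auto.
Qed.

Lemma dd_bound N l y j : (N > 0)%nat -> 0 < l -> equilateral N l y ->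
  - PI <= dd N l y j <= PI.
Proof.
  intros HN Hl Heq. unfold dd.
  destruct (turn_spec (psi N l y j) _ (uu_unit N l y (S j) HN Hl Heq)) as [A [B C]]; auto.
Qed.

Lemma uu_N N l y : (N > 0)%nat -> uu N l y N = uu N l y O.
Proof.
  intros HN. unfold uu, vtx.
  replace (S N mod N)%nat with (1 mod N)%nat.
  2:{ replace (S N) with (1 + 1 * N)%nat by lia. rewrite Nat.mod_add; lia. }
  rewrite Nat.mod_same, Nat.mod_0_l by lia. reflexivity.
Qed.

Lemma sum_uu N l y : (N > 0)%nat -> 0 < l ->
  sm (fun j => fst (uu N l y j)) N = 0 /\ sm (fun j => snd (uu N l y j)) N = 0.
Proof.
  intros HN Hl. unfold uu; cbn [fst snd]. split.
  - rewrite (sm_ext _ (fun j => / l * ((fun k => fst (vtx N y k)) (S j) - (fun k => fst (vtx N y k)) j))).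
    2:{ intros; cbn beta. unfold Rdiv; ring. }
    pose proof (sm_tele (fun k => fst (vtx N y k)) N) as T; cbn beta in T.
    rewrite sm_scal, T. unfold vtx. rewrite Nat.mod_same, Nat.mod_0_l by lia. ring.
  - rewrite (sm_ext _ (fun j => / l * ((fun k => snd (vtx N y k)) (S j) - (fun k => snd (vtx N y k)) j))).
    2:{ intros; cbn beta. unfold Rdiv; ring. }
    pose proof (sm_tele (fun k => snd (vtx N y k)) N) as T; cbn beta in T.
    rewrite sm_scal, T. unfold vtx. rewrite Nat.mod_same, Nat.mod_0_l by lia. ring.
Qed.

Lemma D2_eq N l y : (N > 0)%nat -> 0 < l -> equilateral N l y ->
  D2 N y = sm (fun j => 2 * l * cos (dd N l y j / 2)) N.
Proof.
  intros HN Hl Heq. unfold D2. rewrite sum_f_R0_sm. replace (S (N - 1)) with N by lia.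
  apply sm_ext. intros j _.
  destruct (psi_spec N l y j HN Hl Heq) as [C1 S1].
  destruct (psi_spec N l y (S j) HN Hl Heq) as [C2 S2].
  rewrite psi_S in C2, S2.
  assert (A1 : fst (vtx N y j) - fst (vtx N y (j + 2)) =
     - (l * (cos (psi N l y j) + cos (psi N l y j + dd N l y j)))).
  { rewrite C1, C2. unfold uu; cbn [fst snd]. replace (j + 2)%nat with (S (S j)) by lia. field. lra. }
  assert (A2 : snd (vtx N y j) - snd (vtx N y (j + 2)) =
     - (l * (sin (psi N l y j) + sin (psi N l y j + dd N l y j)))).
  { rewrite S1, S2. unfold uu; cbn [fst snd]. replace (j + 2)%nat with (S (S j)) by lia. field. lra. }
  unfold dist2. rewrite A1, A2.
  rewrite <- (diag_len (psi N l y j) (dd N l y j) l Hl (dd_bound N l y j HN Hl Heq)).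
  f_equal. ring.
Qed.

Lemma cos1_0 x : cos x = 1 -> Rabs x < 2 * PI -> x = 0.
Proof.
  intros Hc Ha. replace x with (2 * (x / 2)) in Hc by field.
  rewrite cos_2a_sin in Hc. assert (Hs : sin (x / 2) = 0) by nra.
  pose proof PI_RGT_0.
  destruct (Rtotal_order x 0) as [Hlt|[Heq|Hgt]]; auto.
  - rewrite Rabs_left in Ha by lra.
    pose proof (sin_lt_0_var (x/2) ltac:(lra) ltac:(lra)). lra.
  - rewrite Rabs_right in Ha by lra.
    pose proof (sin_gt_0 (x/2) ltac:(lra) ltac:(lra)). lra.
Qed.

Lemma argmax (f : nat -> R) n : (n > 0)%nat -> exists a, (a < n)%nat /\ forall j, (j < n)%nat -> f j <= f a.
Proof.
  induction n; intros Hn; [lia|].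
  destruct (Nat.eq_dec n 0) as [->|Hn0].
  - exists 0%nat; split; [lia|]. intros j Hj. replace j with 0%nat by lia. lra.
  - destruct (IHn ltac:(lia)) as [a [Ha Hf]].
    destruct (Rle_dec (f n) (f a)).
    + exists a; split; [lia|]. intros j Hj. destruct (Nat.eq_dec j n) as [->|]; auto. apply Hf; lia.
    + exists n; split; [lia|]. intros j Hj. destruct (Nat.eq_dec j n) as [->|]; [lra|].
      pose proof (Hf j ltac:(lia)). lra.
Qed.

Definition AA N l y n := sm (fun i => Rabs (dd N l y i)) n.

Lemma path_bound N l y m n : (m <= n)%nat ->
  Rabs (psi N l y n - psi N l y m) <= AA N l y n - AA N l y m.
Proof.
  intros Hmn. replace n with (m + (n - m))%nat by lia. generalize (n - m)%nat as k.
  induction k.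
  - rewrite Nat.add_0_r. replace (psi N l y m - psi N l y m) with 0 by ring. rewrite Rabs_R0. lra.
  - replace (m + S k)%nat with (S (m + k)) by lia. rewrite psi_S. unfold AA in *. simpl sm.
    replace (psi N l y (m + k) + dd N l y (m + k) - psi N l y m) with
      ((psi N l y (m + k) - psi N l y m) + dd N l y (m + k)) by ring.
    pose proof (Rabs_triang (psi N l y (m + k) - psi N l y m) (dd N l y (m + k))). lra.
Qed.

Lemma T_eq N l y : psi N l y N - psi N l y 0 = sm (dd N l y) N.
Proof.
  rewrite <- (sm_tele (psi N l y)). apply sm_ext. intros i _. rewrite psi_S. ring.
Qed.

Lemma cosT N l y : (N > 0)%nat -> 0 < l -> equilateral N l y ->
  cos (psi N l y N - psi N l y 0) = 1.
Proof.
  intros HN Hl Heq. rewrite cos_minus.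
  destruct (psi_spec N l y N HN Hl Heq) as [C1 S1].
  destruct (psi_spec N l y 0 HN Hl Heq) as [C2 S2].
  rewrite C1, S1, C2, S2, uu_N by auto. pose proof (uu_unit N l y 0 HN Hl Heq). lra.
Qed.

Lemma trig_sums N l y w : (N > 0)%nat -> 0 < l -> equilateral N l y ->
  sm (fun j => sin (psi N l y j - w)) N = 0 /\ sm (fun j => cos (psi N l y j - w)) N = 0.
Proof.
  intros HN Hl Heq. destruct (sum_uu N l y HN Hl) as [Sx Sy]. split.
  - rewrite (sm_ext _ (fun j => cos w * snd (uu N l y j) + (- sin w) * fst (uu N l y j))).
    + rewrite sm_plus, !sm_scal, Sx, Sy. ring.
    + intros j _. destruct (psi_spec N l y j HN Hl Heq) as [C S]. rewrite sin_minus, C, S. ring.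
  - rewrite (sm_ext _ (fun j => cos w * fst (uu N l y j) + sin w * snd (uu N l y j))).
    + rewrite sm_plus, !sm_scal, Sx, Sy. ring.
    + intros j _. destruct (psi_spec N l y j HN Hl Heq) as [C S]. rewrite cos_minus, C, S. ring.
Qed.

Lemma T0_case N l y : (N > 0)%nat -> 0 < l -> equilateral N l y ->
  psi N l y N = psi N l y 0 -> AA N l y N <= 2 * PI ->
  exists a, (a < N)%nat /\ (forall j, (j < N)%nat -> psi N l y a - psi N l y j <= AA N l y N / 2)
    /\ (forall j, (j < N)%nat -> psi N l y j <= psi N l y a)
    /\ (forall j, (j <= N)%nat -> sin (psi N l y j - psi N l y a) = 0).
Proof.
  intros HN Hl Heq HT HA.
  destruct (argmax (psi N l y) N HN) as [a [Ha Hmax]].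
  assert (Hhalf : forall j, (j <= N)%nat -> psi N l y a - psi N l y j <= AA N l y N / 2).
  { intros j Hj. assert (A0 : AA N l y 0 = 0) by reflexivity.
    destruct (Compare_dec.le_lt_dec j a) as [Hja|Haj].
    - pose proof (path_bound N l y j a Hja) as P1.
      pose proof (path_bound N l y a N ltac:(lia)) as P2.
      pose proof (path_bound N l y 0 j ltac:(lia)) as P3.
      pose proof (Rle_abs (psi N l y a - psi N l y j)).
      pose proof (Rle_abs (-(psi N l y N - psi N l y a))). rewrite Rabs_Ropp in H0.
      pose proof (Rle_abs (-(psi N l y j - psi N l y 0))). rewrite Rabs_Ropp in H1.
      lra.
    - pose proof (path_bound N l y a j ltac:(lia)) as P1.
      pose proof (path_bound N l y 0 a ltac:(lia)) as P2.
      pose proof (path_bound N l y j N ltac:(lia)) as P3.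
      pose proof (Rle_abs (-(psi N l y j - psi N l y a))). rewrite Rabs_Ropp in H.
      pose proof (Rle_abs (psi N l y a - psi N l y 0)).
      pose proof (Rle_abs (psi N l y N - psi N l y j)).
      lra. }
  exists a. split; auto. split; [intros; apply Hhalf; lia|]. split; auto.
  assert (Hle : forall j, (j < N)%nat -> 0 <= -1 * sin (psi N l y j - psi N l y a)).
  { intros j Hj. pose proof (Hmax j Hj). pose proof (Hhalf j ltac:(lia)).
    replace (psi N l y j - psi N l y a) with (- (psi N l y a - psi N l y j)) by ring.
    rewrite sin_neg. pose proof (sin_ge_0 (psi N l y a - psi N l y j) ltac:(lra) ltac:(lra)). lra. }
  assert (Hz := sm_zero _ N Hle).
  assert (Hall : forall j, (j < N)%nat -> sin (psi N l y j - psi N l y a) = 0).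
  { intros j Hj. assert (X : -1 * sin (psi N l y j - psi N l y a) = 0).
    { apply (Hz); auto. rewrite sm_scal. rewrite (proj1 (trig_sums N l y (psi N l y a) HN Hl Heq)). ring. }
    lra. }
  intros j Hj. destruct (Nat.eq_dec j N) as [->|]. rewrite HT. apply Hall; lia. apply Hall; lia.
Qed.

Lemma total_ge N l y : (N > 0)%nat -> 0 < l -> equilateral N l y -> 2 * PI <= AA N l y N.
Proof.
  intros HN Hl Heq. pose proof PI_RGT_0.
  pose proof (sm_abs (dd N l y) N) as Habs. fold (AA N l y N) in Habs. rewrite <- T_eq in Habs.
  destruct (Rle_dec (2 * PI) (Rabs (psi N l y N - psi N l y 0))) as [Hb|Hb]; [lra|].
  assert (HT : psi N l y N - psi N l y 0 = 0) by (apply cos1_0; [apply cosT|]; auto; lra).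
  destruct (Rle_dec (2 * PI) (AA N l y N)) as [|Hlt]; auto. exfalso.
  destruct (T0_case N l y HN Hl Heq ltac:(lra) ltac:(lra)) as [a [Ha [Hh [Hm Hs]]]].
  assert (Hc : forall j, (j < N)%nat -> cos (psi N l y j - psi N l y a) = 1).
  { intros j Hj. pose proof (Hs j ltac:(lia)). pose proof (Hh j Hj).
    destruct (Rtotal_order (psi N l y j - psi N l y a) 0) as [Hn|[Hz|Hp]].
    - pose proof (sin_lt_0_var (psi N l y j - psi N l y a) ltac:(lra) Hn). lra.
    - rewrite Hz. apply cos_0.
    - pose proof (Hm j Hj). lra. }
  pose proof (proj2 (trig_sums N l y (psi N l y a) HN Hl Heq)) as Hsum.
  rewrite (sm_ext _ (fun _ => 1) N Hc), sm_const in Hsum.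
  pose proof (lt_0_INR N ltac:(lia)). lra.
Qed.

Lemma sm_lin a b c f g n :
  sm (fun j => a + b * f j + c * g j) n = INR n * a + b * sm f n + c * sm g n.
Proof. induction n; simpl sm; [simpl; ring | rewrite IHn, S_INR; ring]. Qed.

Lemma hbounds N : (4 <= N)%nat -> 0 < PI / INR N <= PI / 4 /\ INR N * (PI / INR N) = PI.
Proof.
  intros HN. pose proof PI_RGT_0. assert (H4 : 4 <= INR N) by (replace 4 with (INR 4) by (simpl; ring); apply le_INR; auto).
  split; [split|].
  - apply Rdiv_lt_0_compat; lra.
  - apply Rmult_le_compat_l; [lra|]. apply Rinv_le_contravar; lra.
  - field. lra.
Qed.

Lemma D2_bound N l y : (4 <= N)%nat -> 0 < l -> equilateral N l y ->
  D2 N y <= 2 * INR N * l * cos (PI / INR N) /\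
  (D2 N y = 2 * INR N * l * cos (PI / INR N) ->
     forall j, (j < N)%nat -> Rabs (dd N l y j) = 2 * (PI / INR N)).
Proof.
  intros HN Hl Heq. assert (HN0 : (N > 0)%nat) by lia.
  destruct (hbounds N HN) as [[Hh1 Hh2] HNh]. set (h := PI / INR N) in *.
  pose proof PI_RGT_0.
  set (G := fun j => cos h - sin h * (Rabs (dd N l y j) / 2 - h) - cos (Rabs (dd N l y j) / 2)).
  assert (HG : forall j, (j < N)%nat -> 0 <= G j).
  { intros j _. unfold G. pose proof (dd_bound N l y j HN0 Hl Heq).
    pose proof (Rabs_pos (dd N l y j)).
    assert (Rabs (dd N l y j) <= PI) by (apply Rabs_le; lra).
    destruct (tangent h (Rabs (dd N l y j) / 2) ltac:(lra) ltac:(lra)). lra. }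
  assert (HD : D2 N y = 2 * l * (INR N * (cos h + sin h * h) + (- sin h / 2) * AA N l y N + (-1) * sm G N)).
  { rewrite (D2_eq N l y) by (auto; lia). unfold AA. rewrite <- sm_lin. rewrite <- sm_scal. apply sm_ext. intros j _.
    unfold G; cbn beta. replace (cos (dd N l y j / 2)) with (cos (Rabs (dd N l y j) / 2)). lra.
    destruct (Rle_dec 0 (dd N l y j)).
    - rewrite Rabs_right by lra. auto.
    - rewrite Rabs_left by lra. replace (- dd N l y j / 2) with (- (dd N l y j / 2)) by field.
      apply cos_neg. }
  assert (HA := total_ge N l y HN0 Hl Heq).
  assert (Hs : 0 < sin h) by (apply sin_gt_0; lra).
  assert (HsG : 0 <= sm G N) by (apply sm_nonneg; auto).
  assert (E : INR N * (cos h + sin h * h) = INR N * cos h + sin h * PI) by (rewrite <- HNh; ring).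
  rewrite E in HD.
  split.
  - rewrite HD. assert (sin h * (2 * PI) <= sin h * AA N l y N) by (apply Rmult_le_compat_l; lra). nra.
  - intros Heq2 j Hj.
    assert (sin h * (2 * PI) <= sin h * AA N l y N) by (apply Rmult_le_compat_l; lra).
    assert (Hz : sm G N = 0) by nra.
    pose proof (sm_zero G N HG Hz j Hj) as Gj. unfold G in Gj.
    pose proof (dd_bound N l y j HN0 Hl Heq).
    pose proof (Rabs_pos (dd N l y j)).
    assert (Rabs (dd N l y j) <= PI) by (apply Rabs_le; lra).
    destruct (tangent h (Rabs (dd N l y j) / 2) ltac:(lra) ltac:(lra)) as [_ T].
    destruct (Req_dec (Rabs (dd N l y j) / 2) h) as [Q|Q]; [lra|]. specialize (T Q). lra.
Qed.

Lemma same_sign N l y : (4 <= N)%nat -> 0 < l -> equilateral N l y ->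
  (forall j, (j < N)%nat -> Rabs (dd N l y j) = 2 * (PI / INR N)) ->
  exists s, (s = 1 \/ s = -1) /\ forall j, (j < N)%nat -> dd N l y j = s * (2 * (PI / INR N)).
Proof.
  intros HN Hl Heq Hd. assert (HN0 : (N > 0)%nat) by lia.
  destruct (hbounds N HN) as [[Hh1 Hh2] HNh]. set (h := PI / INR N) in *.
  pose proof PI_RGT_0.
  assert (HA : AA N l y N = 2 * PI).
  { unfold AA. rewrite (sm_ext _ (fun _ => 2 * h) N Hd), sm_const. rewrite <- HNh. ring. }
  pose proof (sm_abs (dd N l y) N) as Habs. fold (AA N l y N) in Habs. rewrite <- T_eq in Habs.
  destruct (Rle_dec (2 * PI) (Rabs (psi N l y N - psi N l y 0))) as [Hb|Hb].
  - destruct (Rle_dec 0 (psi N l y N - psi N l y 0)) as [Hp|Hp].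
    + rewrite Rabs_right in Hb, Habs by lra. rewrite T_eq in Hb, Habs.
      exists 1. split; auto. intros j Hj.
      assert (Hz : sm (fun i => Rabs (dd N l y i) + (-1) * dd N l y i) N = 0).
      { rewrite sm_plus, sm_scal. fold (AA N l y N). lra. }
      assert (Hnn : forall i, (i < N)%nat -> 0 <= Rabs (dd N l y i) + (-1) * dd N l y i).
      { intros i _. pose proof (Rle_abs (dd N l y i)). lra. }
      pose proof (sm_zero _ N Hnn Hz j Hj) as Z. cbn beta in Z. rewrite (Hd j Hj) in Z. lra.
    + rewrite Rabs_left in Hb, Habs by lra. rewrite T_eq in Hb, Habs.
      exists (-1). split; auto. intros j Hj.
      assert (Hz : sm (fun i => Rabs (dd N l y i) + 1 * dd N l y i) N = 0).
      { rewrite sm_plus, sm_scal. fold (AA N l y N). lra. }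
      assert (Hnn : forall i, (i < N)%nat -> 0 <= Rabs (dd N l y i) + 1 * dd N l y i).
      { intros i _. pose proof (Rle_abs (- dd N l y i)). rewrite Rabs_Ropp in H0. lra. }
      pose proof (sm_zero _ N Hnn Hz j Hj) as Z. cbn beta in Z. rewrite (Hd j Hj) in Z. lra.
  - exfalso.
    assert (HT : psi N l y N - psi N l y 0 = 0) by (apply cos1_0; [apply cosT|]; auto; lra).
    destruct (T0_case N l y HN0 Hl Heq ltac:(lra) ltac:(lra)) as [a [Ha [_ [_ Hs]]]].
    pose proof (Hs (S a) ltac:(lia)) as Hsa. rewrite psi_S in Hsa.
    replace (psi N l y a + dd N l y a - psi N l y a) with (dd N l y a) in Hsa by ring.
    pose proof (Hd a Ha) as Hda.
    destruct (Rle_dec 0 (dd N l y a)).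
    + rewrite Rabs_right in Hda by lra. pose proof (sin_gt_0 (dd N l y a) ltac:(lra) ltac:(lra)). lra.
    + rewrite Rabs_left in Hda by lra. pose proof (sin_lt_0_var (dd N l y a) ltac:(lra) ltac:(lra)). lra.
Qed.

Lemma y_step N l y s : (4 <= N)%nat -> 0 < l -> equilateral N l y ->
  (forall j, (j < N)%nat -> dd N l y j = s * (2 * (PI / INR N))) ->
  forall j, (S j < N)%nat ->
    y (S j) = (fst (y j) + l * cos (psi N l y 0 + s * (2 * PI / INR N) * INR j),
               snd (y j) + l * sin (psi N l y 0 + s * (2 * PI / INR N) * INR j)).
Proof.
  intros HN Hl Heq Hd j Hj. assert (HN0 : (N > 0)%nat) by lia.
  assert (Hpsi : forall k, (k <= N)%nat -> psi N l y k = psi N l y 0 + s * (2 * PI / INR N) * INR k).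
  { induction k; intros Hk; [simpl INR; ring|]. rewrite psi_S, IHk by lia. rewrite Hd by lia.
    rewrite S_INR. field. pose proof (lt_0_INR N ltac:(lia)). lra. }
  rewrite <- Hpsi by lia. destruct (psi_spec N l y j HN0 Hl Heq) as [C Sn]. rewrite C, Sn.
  unfold uu, vtx. rewrite !Nat.mod_small by lia. cbn [fst snd].
  destruct (y (S j)) as [a b]; destruct (y j) as [c d]; cbn [fst snd]. f_equal; field; lra.
Qed.

Definition Rot (s g : R) (p : pt) : pt :=
  (cos g * fst p - s * sin g * snd p, sin g * fst p + s * cos g * snd p).

Lemma key_step N l s t j : (4 <= N)%nat -> (s = 1 \/ s = -1) ->
  let g := t - s * (PI / INR N + PI / 2) in
  fst (Rot s g (reg_polygon N l (S j))) - fst (Rot s g (reg_polygon N l j)) =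
    l * cos (t + s * (2 * PI / INR N) * INR j) /\
  snd (Rot s g (reg_polygon N l (S j))) - snd (Rot s g (reg_polygon N l j)) =
    l * sin (t + s * (2 * PI / INR N) * INR j).
Proof.
  intros HN Hs g. destruct (hbounds N HN) as [[Hh1 Hh2] HNh].
  assert (HNp : 0 < INR N) by (apply lt_0_INR; lia).
  pose proof PI_RGT_0.
  set (h := PI / INR N) in *.
  assert (Hsh : 0 < sin h) by (apply sin_gt_0; lra).
  set (X := 2 * PI * INR j / INR N + h).
  unfold reg_polygon, Rot; cbv zeta; cbn [fst snd].
  replace (2 * PI * INR (S j) / INR N) with (X + h) by (unfold X, h; rewrite S_INR; field; lra).
  replace (2 * PI * INR j / INR N) with (X - h) by (unfold X; ring).
  fold h. set (r := l / (2 * sin h)).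
  assert (Hl : l = 2 * r * sin h) by (unfold r; field; lra).
  rewrite Hl.
  destruct Hs as [-> | ->].
  - replace (t + 1 * (2 * PI / INR N) * INR j) with ((X + g) + PI / 2)
      by (unfold X, g, h; field; lra).
    repeat first [rewrite cos_plus | rewrite cos_minus | rewrite sin_plus | rewrite sin_minus].
    rewrite cos_PI2, sin_PI2.
    split; ring.
  - replace (t + -1 * (2 * PI / INR N) * INR j) with ((g - X) - PI / 2)
      by (unfold X, g, h; field; lra).
    repeat first [rewrite cos_plus | rewrite cos_minus | rewrite sin_plus | rewrite sin_minus].
    rewrite cos_PI2, sin_PI2.
    split; ring.
Qed.

Lemma regular_of N l y s t : (4 <= N)%nat -> 0 < l -> (s = 1 \/ s = -1) ->
  (forall j, (S j < N)%nat ->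
    y (S j) = (fst (y j) + l * cos (t + s * (2 * PI / INR N) * INR j),
               snd (y j) + l * sin (t + s * (2 * PI / INR N) * INR j))) ->
  is_regular N l y.
Proof.
  intros HN Hl Hs Hy.
  set (g := t - s * (PI / INR N + PI / 2)).
  set (c := (fst (y 0%nat) - fst (Rot s g (reg_polygon N l 0)), snd (y 0%nat) - snd (Rot s g (reg_polygon N l 0)))).
  exists (fun p => (fst c + fst (Rot s g p), snd c + snd (Rot s g p))). split.
  - intros [px py] [qx qy]. unfold dist2, Rot; cbn [fst snd]. f_equal.
    pose proof (cs1 g) as Hg.
    destruct Hs as [-> | ->].
    + assert (E : (fst c + (cos g * px - 1 * sin g * py) - (fst c + (cos g * qx - 1 * sin g * qy))) ^ 2 +
        (snd c + (sin g * px + 1 * cos g * py) - (snd c + (sin g * qx + 1 * cos g * qy))) ^ 2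
        - ((px - qx) ^ 2 + (py - qy) ^ 2) = (cos g ^ 2 + sin g ^ 2 - 1) * ((px - qx) ^ 2 + (py - qy) ^ 2)) by ring.
      rewrite Hg in E. lra.
    + assert (E : (fst c + (cos g * px - -1 * sin g * py) - (fst c + (cos g * qx - -1 * sin g * qy))) ^ 2 +
        (snd c + (sin g * px + -1 * cos g * py) - (snd c + (sin g * qx + -1 * cos g * qy))) ^ 2
        - ((px - qx) ^ 2 + (py - qy) ^ 2) = (cos g ^ 2 + sin g ^ 2 - 1) * ((px - qx) ^ 2 + (py - qy) ^ 2)) by ring.
      rewrite Hg in E. lra.
  - intros i. induction i; intros Hi.
    + unfold c; cbn [fst snd]. destruct (y 0%nat) as [a b]; cbn [fst snd]. f_equal; ring.
    + rewrite (Hy i Hi), IHi by lia. cbn [fst snd].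
      destruct (key_step N l s t i HN Hs) as [K1 K2]. fold g in K1, K2.
      rewrite <- K1, <- K2. f_equal; ring.
Qed.

Lemma reg_mod N l i : (N > 0)%nat -> reg_polygon N l (i mod N) = reg_polygon N l i.
Proof.
  intros HN. assert (HNp : 0 < INR N) by (apply lt_0_INR; lia).
  unfold reg_polygon; cbv zeta.
  assert (E : 2 * PI * INR i / INR N = 2 * PI * INR (i mod N) / INR N + 2 * INR (i / N) * PI).
  { pose proof (Nat.div_mod i N ltac:(lia)) as D.
    assert (INR i = INR N * INR (i / N) + INR (i mod N)) by (rewrite <- mult_INR, <- plus_INR; f_equal; exact D).
    rewrite H. field. lra. }
  rewrite E, cos_period, sin_period. reflexivity.
Qed.

Lemma reg_diag N l i : (4 <= N)%nat -> 0 < l ->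
  dist2 (reg_polygon N l i) (reg_polygon N l (i + 2)) = 2 * l * cos (PI / INR N).
Proof.
  intros HN Hl. destruct (hbounds N HN) as [[Hh1 Hh2] HNh].
  assert (HNp : 0 < INR N) by (apply lt_0_INR; lia).
  pose proof PI_RGT_0.
  set (h := PI / INR N) in *.
  assert (Hsh : 0 < sin h) by (apply sin_gt_0; lra).
  assert (Hch : 0 < cos h) by (apply cos_gt_0; lra).
  set (X := 2 * PI * INR i / INR N + 2 * h).
  unfold reg_polygon, dist2; cbv zeta; cbn [fst snd].
  replace (2 * PI * INR (i + 2) / INR N) with (X + 2 * h) by (unfold X, h; rewrite plus_INR; simpl INR; field; lra).
  replace (2 * PI * INR i / INR N) with (X - 2 * h) by (unfold X; ring).
  fold h. set (r := l / (2 * sin h)).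
  assert (Hl' : l = 2 * r * sin h) by (unfold r; field; lra).
  rewrite !cos_plus, !cos_minus, !sin_plus, !sin_minus, !sin_2a, !cos_2a_cos.
  pose proof (cs1 X) as HX.
  rewrite Hl'.
  assert (E : (r * (cos X * (2 * cos h * cos h - 1) + sin X * (2 * sin h * cos h)) -
      r * (cos X * (2 * cos h * cos h - 1) - sin X * (2 * sin h * cos h))) ^ 2 +
     (r * (sin X * (2 * cos h * cos h - 1) - cos X * (2 * sin h * cos h)) -
      r * (sin X * (2 * cos h * cos h - 1) + cos X * (2 * sin h * cos h))) ^ 2
     - (2 * (2 * r * sin h) * cos h) ^ 2 = 16 * r^2 * sin h ^ 2 * cos h ^ 2 * (cos X ^ 2 + sin X ^ 2 - 1)) by ring.
  rewrite HX in E.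
  match goal with |- sqrt ?A = ?B => replace A with (B ^ 2) by lra end.
  apply sqrt_pow2. unfold r. 
  assert (0 < 2 * (l / (2 * sin h) * 2 * sin h) * cos h).
  { replace (l / (2 * sin h) * 2 * sin h) with l by (field; lra). nra. }
  lra.
Qed.

Theorem proposition5p1 (N : nat) (l : R) :
  (4 <= N)%nat -> 0 < l ->
  D2 N (reg_polygon N l) = 2 * INR N * l * cos (PI / INR N) /\
  forall y : nat -> pt, equilateral N l y ->
    D2 N y <= 2 * INR N * l * cos (PI / INR N) /\
    (D2 N y = 2 * INR N * l * cos (PI / INR N) -> is_regular N l y).
Proof.
  intros HN Hl. split.
  - unfold D2. rewrite sum_f_R0_sm. replace (S (N - 1)) with N by lia.
    rewrite (sm_ext _ (fun _ => 2 * l * cos (PI / INR N))).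
    + rewrite sm_const. ring.
    + intros i _. unfold vtx. rewrite !reg_mod by lia. apply reg_diag; auto.
  - intros y Heq. destruct (D2_bound N l y HN Hl Heq) as [B E]. split; auto.
    intros Hd. specialize (E Hd).
    destruct (same_sign N l y HN Hl Heq E) as [s [Hs Hdd]].
    apply (regular_of N l y s (psi N l y 0)); auto.
    intros j Hj. apply (y_step N l y s); auto.
Qed.
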